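(* Assume the network $\Sigma$ is well-posed, let $\mathcal{A}\subset X$ be nonempty and closed, and assume $f:X\times U\to X$ is $\mathcal{K}$-bounded with respect to $\mathcal{A}$, i.e. there are $\kappa_1,\kappa_2\in\mathcal{K}$ with $|f(\xi,\mu)|_{\mathcal{A}}\le\kappa_1(|\xi|_{\mathcal{A}})+\kappa_2(|\mu|_\infty)$ for all $\xi\in X$, $\mu\in U$. If there exists a finite-step ISS Lyapunov function for $\Sigma$ with respect to $\mathcal{A}$, then $\Sigma$ is ISS with respect to $\mathcal{A}$. Additionally, if $\kappa_1$ is linear, the existence of a finite-step eISS Lyapunov function for $\Sigma$ with respect to $\mathcal{A}$ implies that $\Sigma$ is eISS with respect to $\mathcal{A}$.
   Context: Setting: for each $i\in\mathbb{N}$ fix positive integers $n_i,p_i$, norms on $\mathbb{R}^{n_i},\mathbb{R}^{p_i}$, a finite $I_i\subset\mathbb{N}\setminus\{i\}$ with each $\{j: i\in I_j\}$ finite, and continuous $f_i:\mathbb{R}^{n_i}\times\prod_{j\in I_i}\mathbb{R}^{n_j}\times\mathbb{R}^{p_i}\to\mathbb{R}^{n_i}$. $X$ (resp. $U$) is the space of sequences $(x_i)$, $x_i\in\mathbb{R}^{n_i}$ (resp. $(u_i)$, $u_i\in\mathbb{R}^{p_i}$) with finite sup-norm $|\cdot|_\infty$; $X_E=\prod_i\mathbb{R}^{n_i}$; $f(x,u)_i=f_i(x_i,(x_j)_{j\in I_i},u_i)$; network $\Sigma$: $x(k+1)=f(x(k),u(k))$. $\Sigma$ is well-posed if $f(X\times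 U)\subset X$. $\mathcal{U}$: sequences $u:\mathbb{N}_0\to U$ with $\|u\|_\infty=\sup_k|u(k)|_\infty<\infty$; $x(k,\xi,u)$ the solution with $x(0)=\xi$. $|x|_{\mathcal{A}}=\inf_{y\in\mathcal{A}}|x-y|_\infty$. ISS w.r.t. $\mathcal{A}$: there are $\beta\in\mathcal{KL}$, $\gamma\in\mathcal{K}$ with $|x(k,\xi,u)|_{\mathcal{A}}\le\max\{\beta(|\xi|_{\mathcal{A}},k),\gamma(\|u\|_\infty)\}$ for all $\xi\in X,u\in\mathcal{U},k\in\mathbb{N}_0$; eISS: additionally $\beta(r,k)=C\rho^kr$ with $C\ge1,\rho\in[0,1)$. A continuous $V:X\to[0,\infty)$ is a finite-step ISS Lyapunov function for $\Sigma$ w.r.t. $\mathcal{A}$ if there exist $M\in\mathbb{N}$, $\underline\omega,\overline\omega,\alpha\in\mathcal{K}_\infty$ with $\alpha(s)<s$ for all $s>0$, and $\gamma\in\mathcal{K}$ such that for all $\xi\in X$, $u\in\mathcal{U}$: $\underline\omega(|\xi|_{\mathcal{A}})\le V(\xi)\le\overline\omega(|\xi|_{\mathcal{A}})$ and $V(x(M,\xi,u))\le\max\{\alpha(V(\xi)),\gamma(\|u\|_\infty)\}$. It is a finite-step eISS Lyapunov function if there exist $M\in\mathbb{N}$, constants $\underline w,\overline w,b>0$, $\kappa\in[0,1)$, $\gamma\in\mathcal{K}$ with $\underline w|\xi|_{\mathcal{A}}^b\le V(\xi)\le\overline w|\xi|_{\mathcal{A}}^b$ and $V(x(M,\xi,u))\le\max\{\kappa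 V(\xi),\gamma(\|u\|_\infty)\}$ for all $\xi\in X,u\in\mathcal{U}$. Comparison classes $\mathcal{K},\mathcal{K}_\infty,\mathcal{KL}$ are standard. *)

(* Defs.v *)
From HB Require Import structures.
From mathcomp Require Import all_boot all_order all_algebra.
From mathcomp Require Import all_classical all_reals all_analysis.
Set Implicit Arguments. Unset Strict Implicit. Unset Printing Implicit Defensive.
Import Order.TTheory GRing.Theory Num.Theory.
Import numFieldNormedType.Exports.
Local Open Scope classical_set_scope.
Local Open Scope ring_scope.

Section Defs.
Variable R : realType.

Definition classK (g : R -> R) : Prop :=
  [/\ g 0 = 0,
      {within `[0, +oo[%classic, continuous g} &
      (forall s t, 0 <= s -> s < t -> g s < g t)].

Definition classKinf (g : R -> R) : Prop :=
  classK g /\ (forall M : R, exists s, 0 <= s /\ M < g s).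

Definition classKL (b : R -> R -> R) : Prop :=
  (forall t, 0 <= t -> classK (fun r => b r t)) /\
  (forall r, 0 <= r ->
     (forall s t, 0 <= s -> s <= t -> b r t <= b r s) /\
     (b r t @[t --> +oo] --> 0)).

Definition is_norm (m : nat) (N : 'rV[R]_m -> R) : Prop :=
  [/\ forall x, N x = 0 -> x = 0,
      forall (a : R) x, N (a *: x) = `|a| * N x &
      forall x y, N (x + y) <= N x + N y].

Record network := Network {
  nx : nat -> nat;
  np : nat -> nat;
  normx : forall i, 'rV[R]_(nx i) -> R;
  normu : forall i, 'rV[R]_(np i) -> R;
  Iset : nat -> seq nat;                            (* I_i, a finite set listed without repetition *)
  fi : forall i, 'rV[R]_(nx i) ->
         (forall k : 'I_(size (Iset i)), 'rV[R]_(nx (nth 0%N (Iset i) k))) ->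
         'rV[R]_(np i) -> 'rV[R]_(nx i)
}.
Arguments normx n i _ : clear implicits.
Arguments normu n i _ : clear implicits.
Arguments fi n i _ _ _ : clear implicits.

Variable S : network.

Definition XE := forall i, 'rV[R]_(nx S i).
Definition UE := forall i, 'rV[R]_(np S i).

Definition subX (x y : XE) : XE := fun i => x i - y i.

Definition fi_continuous (i : nat) : Prop :=
  forall (xi : 'rV[R]_(nx S i)) (xs : forall k : 'I_(size (Iset S i)), 'rV[R]_(nx S (nth 0%N (Iset S i) k))) (ui : 'rV[R]_(np S i))
         (eps : R), 0 < eps -> exists2 delta : R, 0 < delta &
    forall (yi : 'rV[R]_(nx S i)) (ys : forall k : 'I_(size (Iset S i)), 'rV[R]_(nx S (nth 0%N (Iset S i) k))) (vi : 'rV[R]_(np S i)),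
      normx S i (xi - yi) < delta ->
      (forall k : 'I_(size (Iset S i)), normx S (nth 0%N (Iset S i) k) (xs k - ys k) < delta) ->
      normu S i (ui - vi) < delta ->
      normx S i (fi S i xi xs ui - fi S i yi ys vi) < eps.

Definition network_ok : Prop :=
  forall i,
    [/\ (0 < nx S i)%N /\ (0 < np S i)%N,
        is_norm (normx S i) /\ is_norm (normu S i),
        uniq (Iset S i) /\ i \notin Iset S i,
        (exists m, forall j, i \in Iset S j -> (j < m)%N) &
        fi_continuous i].

Definition inX (x : XE) : Prop := exists M : R, forall i, normx S i (x i) <= M.
Definition inU (u : UE) : Prop := exists M : R, forall i, normu S i (u i) <= M.
Definition supX (x : XE) : R := sup (range (fun i => normx S i (x i))).
Definition supU (u : UE) : R := sup (range (fun i => normu S i (u i))).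

Definition fnet (x : XE) (u : UE) : XE :=
  fun i => fi S i (x i) (fun k => x (nth 0%N (Iset S i) k)) (u i).

Definition well_posed : Prop := forall x u, inX x -> inU u -> inX (fnet x u).

Definition inUseq (u : nat -> UE) : Prop :=
  (forall k, inU (u k)) /\ exists M : R, forall k, supU (u k) <= M.
Definition normUseq (u : nat -> UE) : R := sup (range (fun k => supU (u k))).

Fixpoint traj (k : nat) (xi : XE) (u : nat -> UE) : XE :=
  match k with
  | 0%N => xi
  | k'.+1 => fnet (traj k' xi u) (u k')
  end.

Definition distA (A : set XE) (x : XE) : R := inf [set supX (subX x y) | y in A].

Definition closedX (A : set XE) : Prop :=
  forall x, inX x ->
    (forall eps : R, 0 < eps -> exists2 y, A y & supX (subX x y) < eps) -> A x.

Definition K_bounded (A : set XE) (k1 k2 : R -> R) : Prop :=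
  forall xi mu, inX xi -> inU mu ->
    distA A (fnet xi mu) <= k1 (distA A xi) + k2 (supU mu).

Definition ISS (A : set XE) : Prop :=
  exists b g, classKL b /\ classK g /\
    forall xi u k, inX xi -> inUseq u ->
      distA A (traj k xi u) <= Num.max (b (distA A xi) k%:R) (g (normUseq u)).

Definition eISS (A : set XE) : Prop :=
  exists (C rho : R) g, 1 <= C /\ 0 <= rho < 1 /\ classK g /\
    forall xi u k, inX xi -> inUseq u ->
      distA A (traj k xi u) <= Num.max (C * rho ^+ k * distA A xi) (g (normUseq u)).

Definition V_continuous (V : XE -> R) : Prop :=
  forall x (eps : R), inX x -> 0 < eps -> exists2 delta : R, 0 < delta &
    forall y, inX y -> supX (subX x y) < delta -> `|V x - V y| < eps.

Definition fs_ISS_LF (A : set XE) (V : XE -> R) : Prop :=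
  V_continuous V /\ (forall x, inX x -> 0 <= V x) /\
  exists (M : nat) wl wu a g,
    [/\ (0 < M)%N, classKinf wl /\ classKinf wu, classKinf a /\
        (forall s, 0 < s -> a s < s), classK g &
        (forall xi, inX xi -> wl (distA A xi) <= V xi <= wu (distA A xi)) /\
        forall xi u, inX xi -> inUseq u ->
          V (traj M xi u) <= Num.max (a (V xi)) (g (normUseq u))].

Definition fs_eISS_LF (A : set XE) (V : XE -> R) : Prop :=
  V_continuous V /\ (forall x, inX x -> 0 <= V x) /\
  exists (M : nat) (wl wu b kappa : R) g,
    [/\ (0 < M)%N, 0 < wl /\ 0 < wu /\ 0 < b, 0 <= kappa < 1, classK g &
        (forall xi, inX xi -> wl * (distA A xi) `^ b <= V xi <= wu * (distA A xi) `^ b) /\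
        forall xi u, inX xi -> inUseq u ->
          V (traj M xi u) <= Num.max (kappa * V xi) (g (normUseq u))].

End Defs.

(* Main.v *)
Require Import Defs.
From HB Require Import structures.
From mathcomp Require Import all_boot all_order all_algebra.
From mathcomp Require Import all_classical all_reals all_analysis.
From mathcomp Require Import ring lra.
Import Order.TTheory GRing.Theory Num.Theory.
Import numFieldNormedType.Exports.
Local Open Scope classical_set_scope.
Local Open Scope ring_scope.


Section KTools.
Context {R : realType}.
Definition contD (f : R -> R) := forall s, 0 <= s -> forall e, 0 < e ->
  exists2 d, 0 < d & forall t, 0 <= t -> `|t - s| < d -> `|f t - f s| < e.

Lemma withinP (f : R -> R) : {within `[0,+oo[, continuous f} <-> contD f.
Proof.
split.
- move=> /subspace_continuousP H s s0 e e0.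
  have Hs : `[0, +oo[%classic s by rewrite /= in_itv /= s0.
  have := H s Hs => /cvgrPdist_lt /(_ e e0).
  rewrite near_withinE /= => /nbhs_ballP [d d0 Hd].
  exists d => // t t0 ts; rewrite distrC; apply: Hd; last by rewrite /= in_itv /= t0.
  by rewrite /ball /= distrC.
- move=> H; apply/subspace_continuousP => s; rewrite /= in_itv /= andbT => s0.
  apply/cvgrPdist_lt => e e0.
  have [d d0 Hd] := H s s0 e e0.
  rewrite near_withinE; apply/nbhs_ballP; exists d => // t /= ts.
  rewrite in_itv /= andbT => t0; rewrite distrC; apply: Hd => //.
  by rewrite distrC.
Qed.

Lemma classKP (f : R -> R) : classK f <->
  [/\ f 0 = 0, contD f & forall s t, 0 <= s -> s < t -> f s < f t].
Proof. by split=> -[a b c]; split => //; apply/withinP. Qed.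

Lemma K_le {f : R -> R} {s t : R} : classK f -> 0 <= s -> s <= t -> f s <= f t.
Proof.
move=> [_ _ H] s0; rewrite le_eqVlt => /orP[/eqP->//|st].
exact/ltW/H.
Qed.

Lemma K_ge0 {f : R -> R} {s : R} : classK f -> 0 <= s -> 0 <= f s.
Proof. by move=> fK s0; have := K_le fK (lexx 0) s0; case: fK => -> _ _. Qed.

Lemma K_max {f : R -> R} {x y : R} : classK f -> 0 <= x -> 0 <= y ->
  f (Num.max x y) = Num.max (f x) (f y).
Proof.
move=> fK x0 y0; case: (leP x y) => xy.
- by rewrite !max_r // K_le.
- by rewrite !max_l // K_le // ltW.
Qed.

Lemma K_comp {f g : R -> R} : classK f -> classK g -> classK (fun x => f (g x)).
Proof.
move=> /classKP[f0 fc fi] gK; have /classKP[g0 gc gi] := gK.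
apply/classKP; split.
- by rewrite g0 f0.
- move=> s s0 e e0.
  have [d1 d10 H1] := fc (g s) (K_ge0 gK s0) e e0.
  have [d2 d20 H2] := gc s s0 d1 d10.
  exists d2 => // t t0 ts; apply: H1; first exact: K_ge0 gK t0.
  exact: H2.
- move=> s t s0 st; apply: fi; first exact: K_ge0 gK s0.
  exact: gi.
Qed.

Lemma K_add {f g : R -> R} : classK f -> classK g -> classK (fun x => f x + g x).
Proof.
move=> /classKP[f0 fc fi] /classKP[g0 gc gi].
apply/classKP; split.
- by rewrite f0 g0 addr0.
- move=> s s0 e e0.
  have e20 : 0 < e / 2 by rewrite divr_gt0.
  have [d1 d10 H1] := fc s s0 _ e20.
  have [d2 d20 H2] := gc s s0 _ e20.
  exists (Num.min d1 d2); first by rewrite lt_min d10 d20.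
  move=> t t0; rewrite lt_min => /andP[t1 t2].
  have := H1 t t0 t1; have := H2 t t0 t2.
  have -> : f t + g t - (f s + g s) = (f t - f s) + (g t - g s) by ring.
  move=> h1 h2; apply: (le_lt_trans (ler_normD _ _)).
  by rewrite (splitr e) ltrD.
- move=> s t s0 st; apply: ltrD; [exact: fi | exact: gi].
Qed.

Lemma K_scale {f : R -> R} c : 0 < c -> classK f -> classK (fun x => c * f x).
Proof.
move=> c0 /classKP[f0 fc fi]; apply/classKP; split.
- by rewrite f0 mulr0.
- move=> s s0 e e0.
  have [d d0 H] := fc s s0 (e / c) (divr_gt0 e0 c0).
  exists d => // t t0 ts; rewrite -mulrBr normrM gtr0_norm //.
  by rewrite -ltr_pdivlMl // mulrC; apply: H.
- by move=> s t s0 st; rewrite ltr_pM2l //; apply: fi.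
Qed.

Lemma K_id : classK (fun x : R => x).
Proof.
apply/classKP; split => // s s0 e e0; by exists e.
Qed.

Lemma K_iter {f : R -> R} n : classK f -> classK (iter n f).
Proof.
move=> fK; elim: n => [|n IH]; first exact: K_id.
by have := K_comp fK IH.
Qed.

Lemma inc_surj_contD (f : R -> R) :
  (forall s t, 0 <= s -> s < t -> f s < f t) ->
  (forall s, 0 <= s -> 0 <= f s) ->
  (forall y, 0 <= y -> exists2 x, 0 <= x & f x = y) -> contD f.
Proof.
move=> fi f0 fs s s0 e e0.
have e20 : 0 < e / 2 by rewrite divr_gt0.
have fs0 := f0 s s0.
have hy2 : 0 <= f s + e / 2 by lra.
have [x2 x20 fx2] := fs (f s + e / 2) hy2.
have sx2 : s < x2.
  rewrite ltNge; apply/negP => x2s.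
  have : f x2 <= f s.
    move: x2s; rewrite le_eqVlt => /orP[/eqP->//|]; by move/(fi _ _ x20)/ltW.
  rewrite fx2; lra.
case: (leP (e / 2) (f s)) => hfs.
- have hy : 0 <= f s - e / 2 by lra.
  have [x1 x10 fx1] := fs (f s - e / 2) hy.
  have x1s : x1 < s.
    rewrite ltNge; apply/negP => sx1.
    have : f s <= f x1.
      move: sx1; rewrite le_eqVlt => /orP[/eqP->//|]; by move/(fi _ _ s0)/ltW.
    rewrite fx1; lra.
  exists (Num.min (x2 - s) (s - x1)); first by rewrite lt_min !subr_gt0 sx2 x1s.
  move=> t t0; rewrite lt_min !ltr_norml => /andP[/andP[h1 h1'] /andP[h2 h2']].
  have tx2 : t < x2 by lra.
  have x1t : x1 < t by lra.
  have ha := fi _ _ t0 tx2; have hb := fi _ _ x10 x1t; rewrite fx2 in ha; rewrite fx1 in hb.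
  apply/andP; split; lra.
- exists (x2 - s); first by rewrite subr_gt0.
  move=> t t0; rewrite ltr_norml => /andP[h1 h1'].
  have tx2 : t < x2 by lra.
  have hb := fi _ _ t0 tx2; rewrite fx2 in hb.
  have ft0 := f0 t t0.
  rewrite ltr_norml; apply/andP; split; lra.
Qed.


Lemma Kinf_inv {w : R -> R} : classKinf w ->
  exists h, classK h /\ (forall s, 0 <= s -> h (w s) = s).
Proof.
move=> [wK wub]; have /classKP[w0 wc wi] := wK.
have surj : forall y, 0 <= y -> exists2 x, 0 <= x & w x = y.
  move=> y y0; have [s [s0 ys]] := wub y.
  have cs : {within `[0, s], continuous w}.
    apply: (continuous_subspaceW (A := `[0, s]%classic) (B := `[0, +oo[%classic)).
      by move=> x /=; rewrite !in_itv /= => /andP[->].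
    by case: wK.
  have [|c] := IVT (v := y) s0 cs.
    by rewrite w0 min_l ?max_r ?y0 ?(ltW ys) // (K_ge0 wK s0).
  by rewrite in_itv /= => /andP[c0 _] wc'; exists c.
have H : forall y, exists x, 0 <= y -> 0 <= x /\ w x = y.
  move=> y; case: (leP 0 y) => y0.
  - by have [x x0 wx] := surj y y0; exists x.
  - by exists 0.
have [h Hh] := choice H.
have winj : forall a b, 0 <= a -> 0 <= b -> w a = w b -> a = b.
  move=> a b a0 b0 wab; case: (ltgtP a b) => // ab.
  - by have := wi _ _ a0 ab; rewrite wab ltxx.
  - by have := wi _ _ b0 ab; rewrite wab ltxx.
have hw : forall s, 0 <= s -> h (w s) = s.
  move=> s s0; have [h0 e] := Hh (w s) (K_ge0 wK s0); exact: winj.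
exists h; split => //; apply/classKP; split.
- by rewrite -{1}w0 hw.
- apply: inc_surj_contD.
  + move=> s t s0 st; have [hs0 ws] := Hh s s0.
    have t0 : 0 <= t by apply: le_trans (ltW st).
    have [ht0 wt] := Hh t t0.
    rewrite ltNge; apply/negP => hts.
    have := K_le wK ht0 hts; rewrite ws wt => ts.
    by move: (lt_le_trans st ts); rewrite ltxx.
  + by move=> s s0; have [] := Hh s s0.
  + by move=> y y0; exists (w y); [exact: K_ge0 wK y0 | exact: hw].
- move=> s t s0 st; have [hs0 ws] := Hh s s0.
  have t0 : 0 <= t by apply: le_trans (ltW st).
  have [ht0 wt] := Hh t t0.
  rewrite ltNge; apply/negP => hts.
  have := K_le wK ht0 hts; rewrite ws wt => ts.
  by move: (lt_le_trans st ts); rewrite ltxx.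
Qed.

Lemma K_powR (p : R) : 0 < p -> classK (fun x => x `^ p).
Proof.
move=> p0; apply/classKP; split.
- by rewrite powR0 // gt_eqF.
- apply: inc_surj_contD.
  + move=> s t s0 st; apply: (gt0_ltr_powR p0) => //; rewrite nnegrE //.
    exact: le_trans (ltW st).
  + by move=> s _; apply: powR_ge0.
  + move=> y y0; exists (y `^ p^-1); first exact: powR_ge0.
    by rewrite -powRrM mulVf ?gt_eqF // powRr1.
- move=> s t s0 st; apply: (gt0_ltr_powR p0) => //; rewrite nnegrE //.
  exact: le_trans (ltW st).
Qed.

Lemma iter_ge0 {a : R -> R} {v : R} n : classK a -> 0 <= v -> 0 <= iter n a v.
Proof. by move=> aK v0; elim: n => //= n IH; apply: K_ge0. Qed.

Lemma iter_to0 {a : R -> R} {v : R} : classK a -> (forall s, 0 < s -> a s < s) ->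
  0 <= v -> forall e, 0 < e -> exists N, iter N a v < e.
Proof.
move=> aK alt v0 e e0; have /classKP[a0 ac ai] := aK.
set E := range (fun n => iter n a v).
have E0 : E !=set0 by exists v, 0%N.
have Elb : has_lbound E.
  by exists 0 => x [n _ <-]; apply: iter_ge0.
have hE : has_inf E by split.
have L0 : 0 <= inf E by apply: lb_le_inf => // x [n _ <-]; apply: iter_ge0.
have L00 : inf E = 0.
  apply/eqP; rewrite eq_le L0 andbT leNgt; apply/negP => Lp.
  have aL := alt _ Lp.
  have aL0 : 0 < inf E - a (inf E) by rewrite subr_gt0.
  have [d d0 Hd] := ac _ L0 (inf E - a (inf E)) aL0.
  have [x [n _ <-] xl] := inf_adherent d0 hE.
  have Lx : inf E <= iter n a v by apply: ge_inf => //; exists n.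
  have Lx1 : inf E <= iter n.+1 a v by apply: ge_inf => //; exists n.+1.
  have hx : `|iter n a v - inf E| < d.
    rewrite ger0_norm ?subr_ge0 //; lra.
  have := Hd _ (iter_ge0 n aK v0) hx.
  rewrite ltr_norml => /andP[_ h].
  rewrite iterS in Lx1; lra.
have [x [n _ <-] xl] := inf_adherent e0 hE.
by exists n; rewrite L00 add0r in xl.
Qed.


Lemma iter_dec {a : R -> R} {v : R} {m n : nat} : classK a -> (forall s, 0 <= s -> a s <= s) ->
  0 <= v -> (m <= n)%N -> iter n a v <= iter m a v.
Proof.
move=> aK ale v0 mn; rewrite -(subnK mn) iterD.
have y0 := iter_ge0 m aK v0; move: (iter m a v) y0 => y y0.
elim: (n - m)%N => //= k IH; apply: le_trans IH; apply: ale.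
exact: iter_ge0.
Qed.

Lemma iter_inc {f : R -> R} {v : R} {m n : nat} : classK f -> (forall s, 0 <= s -> s <= f s) ->
  0 <= v -> (m <= n)%N -> iter m f v <= iter n f v.
Proof.
move=> fK fge v0 mn; rewrite -(subnK mn) iterD.
have y0 := iter_ge0 m fK v0; move: (iter m f v) y0 => y y0.
elim: (n - m)%N => //= k IH; apply: le_trans IH _; apply: fge.
exact: iter_ge0.
Qed.

End KTools.


Section Net.
Context {R : realType}.

Lemma norm_ge0 m (N : 'rV[R]_m -> R) : is_norm N -> forall x, 0 <= N x.
Proof.
case=> _ hom tri x.
have N0 : N 0 = 0 by have := hom 0 x; rewrite scale0r normr0 mul0r.
have := tri x ((-1) *: x); rewrite hom scaleN1r subrr N0 normrN normr1 mul1r.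
lra.
Qed.

Context {S : network R}.
Hypothesis ok : network_ok S.

Lemma normx_ge0 i (v : 'rV[R]_(nx S i)) : 0 <= normx v.
Proof. by have [_ [h _] _ _ _] := ok i; apply: norm_ge0. Qed.

Lemma normu_ge0 i (v : 'rV[R]_(np S i)) : 0 <= normu v.
Proof. by have [_ [_ h] _ _ _] := ok i; apply: norm_ge0. Qed.

Lemma supX_ge0 (x : XE S) : 0 <= supX x.
Proof.
rewrite /supX; set E := range (fun i => normx (x i)).
case: (pselect (has_ubound E)) => hub.
- have h : E (normx (x 0%N)) by exists 0%N.
  exact: le_trans (normx_ge0 _ _) (ub_le_sup hub h).
- by rewrite sup_out // => -[].
Qed.

Lemma supU_ge0 (u : UE S) : 0 <= supU u.
Proof.
rewrite /supU; set E := range (fun i => normu (u i)).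
case: (pselect (has_ubound E)) => hub.
- have h : E (normu (u 0%N)) by exists 0%N.
  exact: le_trans (normu_ge0 _ _) (ub_le_sup hub h).
- by rewrite sup_out // => -[].
Qed.

Lemma distA_ge0 (A : set (XE S)) x : A !=set0 -> 0 <= distA A x.
Proof.
move=> [y Ay]; rewrite /distA; apply: lb_le_inf.
- by exists (supX (subX x y)), y.
- by move=> z [y' _ <-]; apply: supX_ge0.
Qed.

Lemma supU_le (u : nat -> UE S) k : inUseq u -> supU (u k) <= normUseq u.
Proof.
move=> [_ [M hM]]; rewrite /normUseq; apply: ub_le_sup; last by exists k.
by exists M => _ [j _ <-].
Qed.

Lemma normUseq_ge0 {u : nat -> UE S} : inUseq u -> 0 <= normUseq u.
Proof. by move=> hu; exact: le_trans (supU_ge0 (u 0%N)) (supU_le u 0 hu). Qed.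

Definition ushift (u : nat -> UE S) m := fun j => u (m + j)%N.

Lemma shift_inUseq {u : nat -> UE S} m : inUseq u -> inUseq (ushift u m).
Proof.
move=> [h1 [M hM]]; split; first by move=> k; apply: h1.
by exists M => k; apply: hM.
Qed.

Lemma normUseq_shift {u : nat -> UE S} m : inUseq u -> normUseq (ushift u m) <= normUseq u.
Proof.
move=> hu; rewrite {1}/normUseq; apply: ge_sup.
- by exists (supU (ushift u m 0%N)), 0%N.
- by move=> _ [j _ <-]; apply: supU_le u (m + j)%N hu.
Qed.

Lemma traj_inX {xi : XE S} {u : nat -> UE S} k : well_posed S -> inX xi -> inUseq u -> inX (traj k xi u).
Proof.
move=> wp hx hu; elim: k => //= k IH; apply: wp => //; exact: hu.1.
Qed.

Lemma traj_add n m (xi : XE S) (u : nat -> UE S) : traj (n + m) xi u = traj n (traj m xi u) (ushift u m).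
Proof.
elim: n => //= n IH; rewrite IH /ushift addnC //.
Qed.

Lemma dist_step (A : set (XE S)) k1 k2 (x : XE S) (u : nat -> UE S) j :
  K_bounded A k1 k2 -> classK k2 -> well_posed S -> inX x -> inUseq u ->
  distA A (traj j.+1 x u) <= k1 (distA A (traj j x u)) + k2 (normUseq u).
Proof.
move=> kb k2K wp hx hu /=.
apply: le_trans (kb _ _ (traj_inX j wp hx hu) (hu.1 j)) _.
rewrite lerD2l; exact: K_le k2K (supU_ge0 _) (supU_le u j hu).
Qed.

Lemma lyap_iter (V : XE S -> R) (a g : R -> R) M :
  (forall x, inX x -> 0 <= V x) ->
  (forall s t, 0 <= s -> s <= t -> a s <= a t) ->
  (forall s, 0 <= s -> a s <= s) -> (forall s, 0 <= s -> 0 <= a s) ->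
  classK g -> well_posed S ->
  (forall xi u, inX xi -> inUseq u ->
     V (traj M xi u) <= Num.max (a (V xi)) (g (normUseq u))) ->
  forall xi u q, inX xi -> inUseq u ->
  V (traj (q * M) xi u) <= Num.max (iter q a (V xi)) (g (normUseq u)).
Proof.
move=> V0 amono ale a0 gK wp H xi u q hx hu.
have it0 : forall n, 0 <= iter n a (V xi).
  by elim=> [|n IH] /=; [exact: V0 | exact: a0].
have gW0 : 0 <= g (normUseq u) by apply: K_ge0 gK (normUseq_ge0 hu).
elim: q => [|q IH]; first by rewrite mul0n /= le_max lexx.
rewrite mulSn traj_add.
apply: le_trans (H _ _ (traj_inX _ wp hx hu) (shift_inUseq _ hu)) _.
rewrite ge_max; apply/andP; split; last first.
  rewrite le_max; apply/orP; right.
  exact: K_le gK (normUseq_ge0 (shift_inUseq _ hu)) (normUseq_shift _ hu).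
apply: le_trans (amono _ _ (V0 _ (traj_inX _ wp hx hu)) IH) _.
case: (leP (iter q a (V xi)) (g (normUseq u))) => hle.
- rewrite le_max; apply/orP; right; exact: ale.
- by rewrite le_max lexx.
Qed.

End Net.

Section Seq.
Context {R : realType}.

Lemma seq_iss (d : nat -> R) (k1 k2 : R -> R) W :
  classK k1 -> classK k2 -> 0 <= W -> (forall j, 0 <= d j) ->
  (forall j, d j.+1 <= k1 (d j) + k2 W) ->
  forall j, d j <= iter j (fun z => z + k1 z + k2 z) (Num.max (d 0%N) W) /\
            Num.max (d 0%N) W <= iter j (fun z => z + k1 z + k2 z) (Num.max (d 0%N) W).
Proof.
move=> k1K k2K W0 d0 H; elim=> [|j [IH1 IH2]] /=.
  by rewrite le_max lexx.
set y := iter j _ _ in IH1 IH2 *.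
have m0 : 0 <= Num.max (d 0%N) W by rewrite le_max d0.
have y0 : 0 <= y by apply: le_trans IH2.
have Wy : W <= y by apply: le_trans IH2; rewrite le_max lexx orbT.
have k1y := K_ge0 k1K y0; have k2y := K_ge0 k2K y0.
split.
- apply: le_trans (H j) _.
  have := K_le k1K (d0 j) IH1; have := K_le k2K W0 Wy; lra.
- lra.
Qed.

Lemma seq_eiss (d : nat -> R) c K :
  0 <= c -> 0 <= K -> (forall j, 0 <= d j) ->
  (forall j, d j.+1 <= c * d j + K) ->
  forall j, d j <= (c + 1) ^+ j * (d 0%N + K).
Proof.
move=> c0 K0 d0 H; elim=> [|j IH]; first by rewrite expr0 mul1r lerDl.
apply: le_trans (H j) _.
have L1 : 1 <= (c + 1) ^+ j by apply: exprn_ege1; lra.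
have X0 : 0 <= d 0%N + K by have := d0 0%N; lra.
rewrite exprS.
have : c * d j <= c * ((c + 1) ^+ j * (d 0%N + K)) by apply: ler_wpM2l.
have : K <= (c + 1) ^+ j * (d 0%N + K).
  apply: le_trans (_ : d 0%N + K <= _); first by have := d0 0%N; lra.
  by rewrite ler_peMl.
nra.
Qed.

End Seq.


Section Main.
Context {R : realType}.

Lemma trunc_nat (k : nat) : Num.Def.trunc (k%:R : R) = k.
Proof. by apply: truncn_def; rewrite lexx ltr_nat ltnSn. Qed.

Lemma max3_le (x y z : R) : 0 <= y -> 0 <= z ->
  Num.max (Num.max x y) z <= Num.max x (y + z).
Proof.
move=> y0 z0; rewrite !ge_max !le_max lexx /= lerDl z0 lerDr y0 !orbT //.
Qed.

Lemma iss_part (S : network R) (A : set (XE S)) (k1 k2 : R -> R) :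
  network_ok S -> well_posed S -> A !=set0 ->
  classK k1 -> classK k2 -> K_bounded A k1 k2 ->
  (exists V, fs_ISS_LF A V) -> ISS A.
Proof.
move=> ok wp A0 k1K k2K kb [V [Vc [V0 [M [wl [wu [a [g
  [M0 [wlK wuK] [aKi alt] gK [Vb Vdec]]]]]]]]]].
have [h [hK hw]] := Kinf_inv wlK.
have aK : classK a := aKi.1.
have ale : forall s, 0 <= s -> a s <= s.
  move=> s; rewrite le_eqVlt => /orP[/eqP<-|/alt/ltW//].
  by case: aK => ->.
pose th := fun z => z + k1 z + k2 z.
have thK : classK th by apply: K_add (K_add K_id k1K) k2K.
have thge : forall s, 0 <= s -> s <= th s.
  by move=> s s0; rewrite /th -addrA lerDl addr_ge0 // K_ge0.
pose Th := iter M th.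
have ThK : classK Th by apply: K_iter.
pose beta := fun r t : R => Th (h (iter (Num.Def.trunc t %/ M) a (wu r))).
pose gam := fun w => Th (h (g w)) + Th w.
have PhK : classK (fun z => Th (h z)) by apply: K_comp ThK hK.
have wuK' : classK wu := wuK.1.
exists beta, gam; split; [|split].
- split.
  + move=> t t0; rewrite /beta.
    exact: (K_comp PhK (K_comp (K_iter _ aK) wuK')).
  + move=> r r0; split.
    * move=> s t s0 st; rewrite /beta.
      apply: (K_le PhK); first by apply: iter_ge0 => //; apply: K_ge0 wuK' r0.
      apply: iter_dec => //; first exact: K_ge0 wuK' r0.
      by apply: leq_div2r; apply: le_truncn.
    * apply/cvgrPdist_lt => e e0.
      have /classKP[Ph0 Phc Phi] := PhK.
      have [d d0 Hd] := Phc 0 (lexx 0) e e0.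
      have wur0 := K_ge0 wuK' r0.
      have [N hN] := iter_to0 aK alt wur0 _ d0.
      exists (N * M)%:R; split; first by rewrite realE ler0n.
      move=> t Ht.
      have t0 : 0 <= t by apply: le_trans (ltW Ht).
      have NM : (N * M <= Num.Def.trunc t)%N by rewrite truncn_ge_nat // ltW.
      have Nq : (N <= Num.Def.trunc t %/ M)%N.
        by rewrite -(mulnK N M0) leq_div2r.
      have it0 := iter_ge0 (Num.Def.trunc t %/ M) aK wur0.
      have itN : iter (Num.Def.trunc t %/ M) a (wu r) < d.
        by apply: le_lt_trans (iter_dec _ ale wur0 Nq) hN.
      have := Hd _ it0; rewrite subr0 ger0_norm // Ph0 subr0 => /(_ itN).
      rewrite /beta sub0r normrN ger0_norm //.
      by apply: K_ge0 PhK it0.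
- exact: (K_add (K_comp PhK gK) ThK).
- move=> xi u k hx hu.
  set W := normUseq u; set d0 := distA A xi.
  have W0 : 0 <= W by apply: normUseq_ge0.
  have d00 : 0 <= d0 by apply: distA_ge0.
  rewrite (divn_eq k M) addnC traj_add.
  set q := (k %/ M)%N; set r := (k %% M)%N.
  set x1 := traj (q * M) xi u; set u1 := ushift u (q * M).
  have hx1 : inX x1 by apply: traj_inX.
  have hu1 : inUseq u1 by apply: shift_inUseq.
  set W1 := normUseq u1.
  have W10 : 0 <= W1 by apply: normUseq_ge0.
  have W1W : W1 <= W by apply: normUseq_shift.
  set d1 := distA A x1.
  have d10 : 0 <= d1 by apply: distA_ge0.
  have st1 : distA A (traj r x1 u1) <= iter r th (Num.max d1 W1).
    have := @seq_iss R (fun j => distA A (traj j x1 u1)) k1 k2 W1 k1K k2K W10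
      (fun j => distA_ge0 ok A _ A0) (fun j => dist_step ok A k1 k2 x1 u1 j kb k2K wp hx1 hu1) r.
    by case.
  have rM : (r <= M)%N by apply: ltnW; rewrite ltn_mod.
  have st2 : iter r th (Num.max d1 W1) <= Th (Num.max d1 W).
    have m0 : 0 <= Num.max d1 W1 by rewrite le_max d10.
    have mm : Num.max d1 W1 <= Num.max d1 W.
      by rewrite ge_max !le_max lexx W1W orbT.
    have m1 : 0 <= Num.max d1 W by rewrite le_max d10.
    apply: le_trans (K_le (K_iter r thK) m0 mm) _.
    exact: iter_inc thK thge m1 rM.
  have Vx1 : V x1 <= Num.max (iter q a (wu d0)) (g W).
    have amono : forall s t, 0 <= s -> s <= t -> a s <= a t.
      by move=> s t s0; apply: K_le aK s0.
    have a0 : forall s, 0 <= s -> 0 <= a s by move=> s s0; apply: K_ge0 aK s0.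
    apply: le_trans (lyap_iter ok V a g M V0 amono ale a0 gK wp Vdec xi u q hx hu) _.
    rewrite ge_max !le_max lexx orbT andbT.
    apply/orP; left; apply: K_le (K_iter q aK) (V0 _ hx) _.
    by have := Vb _ hx => /andP[].
  have d1b : d1 <= Num.max (h (iter q a (wu d0))) (h (g W)).
    have := Vb _ hx1 => /andP[hl _].
    have i0 : 0 <= iter q a (wu d0) by apply: iter_ge0 => //; apply: K_ge0 wuK' d00.
    have g0 : 0 <= g W by apply: K_ge0 gK W0.
    rewrite -(K_max hK i0 g0) -(hw _ d10).
    apply: K_le hK _ (le_trans hl Vx1).
    by apply: K_ge0 wlK.1 d10.
  apply: le_trans st1 _; apply: le_trans st2 _.
  have i0 : 0 <= iter q a (wu d0) by apply: iter_ge0 => //; apply: K_ge0 wuK' d00.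
  have g0 : 0 <= g W by apply: K_ge0 gK W0.
  have P0 : 0 <= h (iter q a (wu d0)) := K_ge0 hK i0.
  have Q0 : 0 <= h (g W) := K_ge0 hK g0.
  have m1 : 0 <= Num.max d1 W by rewrite le_max d10.
  have mm : Num.max d1 W <= Num.max (Num.max (h (iter q a (wu d0))) (h (g W))) W.
    rewrite ge_max; apply/andP; split; last by rewrite le_max lexx orbT.
    by apply: le_trans d1b _; rewrite le_max lexx.
  apply: le_trans (K_le ThK m1 mm) _.
  have PQ0 : 0 <= Num.max (h (iter q a (wu d0))) (h (g W)) by rewrite le_max P0.
  rewrite (K_max ThK PQ0 W0) (K_max ThK P0 Q0).
  rewrite /beta /gam trunc_nat.
  have -> : ((r + q * M) %/ M = q)%N.
    by rewrite addnC divnMDl // divn_small ?addn0 // ltn_mod.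
  by apply: max3_le; [exact: K_ge0 ThK Q0 | exact: K_ge0 ThK W0].
Qed.


End Main.


Section E.
Context {R : realType}.
Lemma expr_mono_ge1 (x : R) m n : 1 <= x -> (m <= n)%N -> x ^+ m <= x ^+ n.
Proof.
move=> x1 mn; rewrite -(subnK mn) exprD mulrC.
by apply: ler_peMr; [apply: exprn_ge0; lra | apply: exprn_ege1].
Qed.

Lemma expr_mono_le1 (x : R) m n : 0 <= x -> x <= 1 -> (m <= n)%N -> x ^+ n <= x ^+ m.
Proof.
move=> x0 x1 mn; rewrite -(subnK mn) exprD mulrC.
by apply: ler_piMr; [apply: exprn_ge0 | apply: exprn_ile1].
Qed.

Lemma iter_mul (kp v : R) q : iter q (fun s => kp * s) v = kp ^+ q * v.
Proof. by elim: q => [|q IH] /=; rewrite ?expr0 ?mul1r // IH exprS mulrA. Qed.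

Lemma powR_exprn (x p : R) q : 0 <= x -> (x ^+ q) `^ p = (x `^ p) ^+ q.
Proof.
move=> x0; rewrite -powR_mulrn // powRAC powR_mulrn //; exact: powR_ge0.
Qed.

Lemma eiss_part (S : network R) (A : set (XE S)) (k1 k2 : R -> R) :
  network_ok S -> well_posed S -> A !=set0 ->
  classK k1 -> classK k2 -> K_bounded A k1 k2 ->
  (exists c : R, forall s, 0 <= s -> k1 s = c * s) ->
  (exists V, fs_eISS_LF A V) -> eISS A.
Proof.
move=> ok wp A0 k1K k2K kb [c hc] [V [Vc [V0 [M [wl [wu [b [kap [g
  [M0 [wl0 [wu0 b0]] /andP[kap0 kap1] gK [Vb Vdec]]]]]]]]]]].
have c0 : 0 <= c.
  have := K_ge0 k1K (@ler01 R); rewrite hc ?ler01 // mulr1 //.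
pose kp := Num.max kap (1 / 2).
have kp0 : 0 < kp by rewrite lt_max; apply/orP; right; lra.
have kp1 : kp < 1 by rewrite gt_max kap1 /=; lra.
have kapkp : kap <= kp by rewrite le_max lexx.
pose a := fun s : R => kp * s.
have Vdec' : forall xi u, inX xi -> inUseq u ->
    V (traj M xi u) <= Num.max (a (V xi)) (g (normUseq u)).
  move=> xi u hx hu; apply: le_trans (Vdec _ _ hx hu) _.
  rewrite ge_max !le_max lexx orbT andbT; apply/orP; left.
  by rewrite /a ler_wpM2r // V0.
have amono : forall s t, 0 <= s -> s <= t -> a s <= a t.
  by move=> s t s0 st; rewrite /a ler_wpM2l // ltW.
have ale : forall s, 0 <= s -> a s <= s.
  by move=> s s0; rewrite /a ler_piMl // ltW.
have a0 : forall s, 0 <= s -> 0 <= a s by move=> s s0; rewrite /a mulr_ge0 // ltW.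
pose p := b^-1.
have p0 : 0 < p by rewrite invr_gt0.
have bp : b * p = 1 by rewrite mulfV // gt_eqF.
pose r1 := kp `^ p.
have r10 : 0 < r1 by apply: powR_gt0.
have r11 : r1 < 1.
  have := @gt0_ltr_powR R p p0 kp 1; rewrite powR1 => -> //; rewrite nnegrE //; exact: ltW.
pose rho := r1 `^ (M%:R^-1).
have rho0 : 0 < rho by apply: powR_gt0.
have rhoM : rho ^+ M = r1.
  rewrite -powR_mulrn ?powR_ge0 // -powRrM mulVf ?powRr1 ?pnatr_eq0 -?lt0n //.
  exact: ltW.
have rho1 : rho < 1.
  rewrite ltNge; apply/negP => h1.
  have := exprn_ege1 M h1; rewrite rhoM; lra.
pose L := c + 1.
have L1 : 1 <= L by rewrite /L; lra.
have LM0 : 0 < L ^+ M by apply: exprn_gt0; lra.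
pose P := (wu / wl) `^ p.
have P0 : 0 <= P by apply: powR_ge0.
pose C := Num.max 1 (2 * L ^+ M * P / r1).
pose gam := fun w => 2 * L ^+ M * ((wl^-1 * g w) `^ p + k2 w).
exists C, rho, gam; split; first by rewrite le_max lexx.
split; first by rewrite ltW // rho1.
split.
  have wli0 : 0 < wl^-1 by rewrite invr_gt0.
  have c2 : 0 < 2 * L ^+ M by rewrite mulr_gt0.
  exact: (K_scale _ c2 (K_add (K_comp (K_powR _ p0) (K_scale _ wli0 gK)) k2K)).
move=> xi u k hx hu.
set W := normUseq u; set d0 := distA A xi.
have W0 : 0 <= W by apply: normUseq_ge0.
have d00 : 0 <= d0 by apply: distA_ge0.
rewrite (divn_eq k M) addnC traj_add.
set q := (k %/ M)%N; set r := (k %% M)%N.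
set x1 := traj (q * M) xi u; set u1 := ushift u (q * M).
have hx1 : inX x1 by apply: traj_inX.
have hu1 : inUseq u1 by apply: shift_inUseq.
set W1 := normUseq u1.
have W10 : 0 <= W1 by apply: normUseq_ge0.
have W1W : W1 <= W by apply: normUseq_shift.
set d1 := distA A x1.
have d10 : 0 <= d1 by apply: distA_ge0.
have k2W0 : 0 <= k2 W := K_ge0 k2K W0.
have rM : (r <= M)%N by apply: ltnW; rewrite ltn_mod.
have st1 : distA A (traj r x1 u1) <= L ^+ M * (d1 + k2 W).
  have := @seq_eiss R (fun j => distA A (traj j x1 u1)) c (k2 W1) c0
    (K_ge0 k2K W10) (fun j => distA_ge0 ok A _ A0).
  move=> /(_ _ r) /= H.
  apply: le_trans (H _) _.
    move=> j; apply: le_trans (dist_step ok A k1 k2 x1 u1 j kb k2K wp hx1 hu1) _.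
    by rewrite hc //; apply: distA_ge0.
  apply: ler_pM.
  - by apply: exprn_ge0; lra.
  - by rewrite addr_ge0 // K_ge0.
  - exact: expr_mono_ge1.
  - by rewrite lerD2l; apply: K_le k2K W10 W1W.
have Vx1 : V x1 <= Num.max (kp ^+ q * (wu * d0 `^ b)) (g W).
  apply: le_trans (lyap_iter ok V a g M V0 amono ale a0 gK wp Vdec' xi u q hx hu) _.
  rewrite iter_mul ge_max !le_max lexx orbT andbT.
  apply/orP; left; apply: ler_wpM2l; first by apply: exprn_ge0; exact: ltW.
  by have := Vb _ hx => /andP[].
pose G := (wl^-1 * g W) `^ p.
have G0 : 0 <= G by apply: powR_ge0.
pose Z := r1 ^+ q * P * d0.
have Z0 : 0 <= Z.
  apply: mulr_ge0 => //; apply: mulr_ge0 => //; apply: exprn_ge0; exact: ltW.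
have d1b : d1 <= Num.max Z G.
  have := Vb _ hx1 => /andP[hl _].
  have hl' := le_trans hl Vx1.
  have d1E : d1 = (d1 `^ b) `^ p by rewrite -powRrM bp powRr1.
  have gW0 : 0 <= g W := K_ge0 gK W0.
  have db0 : 0 <= d1 `^ b by apply: powR_ge0.
  have X0 : 0 <= kp ^+ q * (wu * d0 `^ b).
    apply: mulr_ge0; [apply: exprn_ge0; exact: ltW | apply: mulr_ge0; [exact: ltW | exact: powR_ge0]].
  have wl0' : 0 < wl^-1 by rewrite invr_gt0.
  case: (leP (kp ^+ q * (wu * d0 `^ b)) (g W)) => hXY; rewrite ?(max_r hXY) ?(max_l (ltW hXY)) in hl'.
  - rewrite le_max; apply/orP; right; rewrite d1E /G.
    apply: (K_le (K_powR _ p0)) => //.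
    by rewrite mulrC ler_pdivlMr // mulrC.
  - rewrite le_max; apply/orP; left; rewrite d1E.
    apply: le_trans (_ : (wl^-1 * (kp ^+ q * (wu * d0 `^ b))) `^ p <= _).
      apply: (K_le (K_powR _ p0)) => //.
      by rewrite mulrC ler_pdivlMr // mulrC.
    have -> : wl^-1 * (kp ^+ q * (wu * d0 `^ b)) = kp ^+ q * ((wu / wl) * d0 `^ b).
      by rewrite mulrCA; congr (_ * _); rewrite mulrCA mulrA.
    have kq0 : 0 <= kp ^+ q by apply: exprn_ge0; exact: ltW.
    have wuwl0 : 0 <= wu / wl by apply: divr_ge0; exact: ltW.
    have db0' : 0 <= d0 `^ b by apply: powR_ge0.
    rewrite (powRM _ kq0 (mulr_ge0 wuwl0 db0')) (powRM _ wuwl0 db0').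
    rewrite -powRrM bp powRr1 // (powR_exprn _ _ _ (ltW kp0)).
    by rewrite /Z /P /r1 mulrA.
apply: le_trans st1 _.
have st3 : L ^+ M * (d1 + k2 W) <= L ^+ M * (Num.max Z G + k2 W).
  by rewrite ler_pM2l // lerD2r.
apply: le_trans st3 _.
have rhok : r1 ^+ q * r1 <= rho ^+ (r + q * M).
  rewrite exprD mulnC exprM rhoM mulrC; apply: ler_wpM2r.
    by apply: exprn_ge0; exact: ltW.
  by rewrite -{1}rhoM; apply: expr_mono_le1 => //; exact: ltW.
have K0 : 0 <= 2 * L ^+ M * P / r1.
  apply: divr_ge0; last exact: ltW.
  by apply: mulr_ge0 => //; apply: mulr_ge0 => //; exact: ltW.
have CZ : 2 * L ^+ M * Z <= C * rho ^+ (r + q * M) * d0.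
  have -> : 2 * L ^+ M * Z = (2 * L ^+ M * P / r1) * (r1 ^+ q * r1) * d0.
    by rewrite /Z; field; rewrite gt_eqF.
  apply: ler_wpM2r => //; apply: ler_pM => //.
  - by apply: mulr_ge0; [apply: exprn_ge0; exact: ltW | exact: ltW].
  - by rewrite le_max lexx orbT.
have gW : gam W = 2 * L ^+ M * (G + k2 W) by [].
rewrite le_max gW.
case: (leP Z G) => hZG.
- apply/orP; right.
  have h1 : 0 <= L ^+ M * G := mulr_ge0 (ltW LM0) G0.
  have h2 : 0 <= L ^+ M * k2 W := mulr_ge0 (ltW LM0) k2W0.
  lra.
case: (leP (k2 W) Z) => hk.
- apply/orP; left; apply: le_trans CZ.
  rewrite [2 * _]mulrC -mulrA ler_pM2l //.
  lra.
- apply/orP; right; rewrite [2 * _]mulrC -mulrA ler_pM2l //.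
  lra.
Qed.

End E.

Theorem proposition2 (R : realType) (S : network R) (A : set (XE S))
    (k1 k2 : R -> R) :
  network_ok S -> well_posed S ->
  (A `<=` @inX R S) -> (A !=set0) -> closedX A ->
  classK k1 -> classK k2 -> K_bounded A k1 k2 ->
  ((exists V, fs_ISS_LF A V) -> ISS A) /\
  ((exists c : R, forall s, 0 <= s -> k1 s = c * s) ->
     (exists V, fs_eISS_LF A V) -> eISS A).
Proof.
move=> ok wp _ A0 _ k1K k2K kb; split.
- exact: iss_part ok wp A0 k1K k2K kb.
- move=> hc; exact: eiss_part ok wp A0 k1K k2K kb hc.
Qed.
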